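(* Let $G$ be a $2$-connected graph, $k\ge 0$ an integer, and $F\subseteq E(G)$ with $|F|\le k$ such that $T=G/F$ is a cactus; let $\mathcal{W}$ be the $T$-witness structure of $G$. Let $f:V(G)\to\{1,2,3\}$ be a random coloring in which each vertex receives a color independently and uniformly at random. Then $f$ is compatible with $\mathcal{W}$ with probability at least $1/3^{6k}$.
   Context: A cactus is a connected graph in which every edge lies in at most one cycle. For $F\subseteq E(G)$, $G/F$ is the graph whose vertices correspond to the parts of the partition of $V(G)$ into the vertex sets of connected components of $(V(F),F)$ and singletons $\{v\}$ for $v\notin V(F)$, two parts adjacent iff some edge of $G$ joins them; this partition is the $G/F$-witness structure $\mathcal{W}$, with $W(t)$ the part for $t\in V(G/F)$. A witness set is big if it has at least two vertices, singleton otherwise. A cable path in a graph $H$ is a path $(v_1,\dots,v_q)$ such that $N_H(v_i)=\{v_{i-1},v_{i+1}\}$ for each $2\le i\le q-1$. A coloring $f:V(G)\to\{1,2,3\}$ is compatible with $\mathcal{W}$ if: (1) every witness set is monochromatic; (2) for every edge $t_xt_y\in E(T)$ with $W(t_x),W(t_y)$ both big, $f(W(t_x))\ne f(W(t_y))$; (3) for every cable path $(t_x,t_1,\dots,t_q,t_y)$ in $T$ ($q\ge1$) with $W(t_x),W(t_y)$ big and all $W(t_i)$ singleton, $f(W(t_x))\neq f(W(t_1))$ and $f(W(t_y))\ne f(W(t_q))$. *)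

(* Defs.v *)
From mathcomp Require Import all_boot.
Set Implicit Arguments. Unset Strict Implicit. Unset Printing Implicit Defensive.

Section Defs.
Variable V : finType.

Definition simple_graph (e : rel V) : Prop := symmetric e /\ irreflexive e.

Definition connected_graph (e : rel V) : Prop := forall x y : V, connect e x y.

Definition two_connected (e : rel V) : Prop :=
  2 < #|V| /\ connected_graph e /\
  forall v x y : V, x != v -> y != v ->
    connect (fun a b => [&& e a b, a != v & b != v]) x y.

Definition edge_subset (e : rel V) (F : {set {set V}}) : Prop :=
  forall s, s \in F -> exists x y, e x y /\ s = [set x; y].

Definition Frel (F : {set {set V}}) : rel V := fun x y => [set x; y] \in F.

(* witness set containing x: its component in (V,F) (a singleton if x is not in V(F)) *)
Definition W (F : {set {set V}}) (x : V) : {set V} := [set y | connect (Frel F) x y].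

(* vertex set of G/F: the parts of the witness structure *)
Definition parts (F : {set {set V}}) : {set {set V}} := [set W F x | x in V].

(* adjacency of G/F (on {set V}; non-parts are isolated) *)
Definition contr_adj (e : rel V) (F : {set {set V}}) : rel {set V} :=
  fun A B => [&& A \in parts F, B \in parts F, A != B &
                 [exists x in A, exists y in B, e x y]].

Definition big (A : {set V}) : bool := 1 < #|A|.
Definition singleton (A : {set V}) : bool := #|A| == 1.
End Defs.

Section Graph.
Variable U : finType.
Variable adj : rel U.

Definition is_cycle (c : seq U) : bool := [&& 2 < size c, uniq c & cycle adj c].

Definition cycle_edge (c : seq U) (a b : U) : bool :=
  ((a, b) \in zip c (rot 1 c)) || ((b, a) \in zip c (rot 1 c)).

(* cactus on vertex set P: connected and each edge lies in at most one cycle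
   (cycles being identified with their edge sets, i.e. as subgraphs). *)
Definition cactus (P : {set U}) : Prop :=
  (forall a b, a \in P -> b \in P -> connect adj a b) /\
  forall a b c1 c2, adj a b -> is_cycle c1 -> is_cycle c2 ->
    cycle_edge c1 a b -> cycle_edge c2 a b ->
    forall x y, cycle_edge c1 x y = cycle_edge c2 x y.

Definition nbhd (t : U) : {set U} := [set u | adj t u].

Definition cable_path (tx : U) (ts : seq U) (ty : U) : Prop :=
  let s := tx :: rcons ts ty in
  [/\ uniq s, path adj tx (rcons ts ty) &
      forall i, 0 < i -> i < (size s).-1 ->
        nbhd (nth tx s i) = [set nth tx s i.-1; nth tx s i.+1]].
End Graph.

Definition compatible (V : finType) (e : rel V) (F : {set {set V}})
    (f : {ffun V -> 'I_3}) : Prop :=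
  [/\
      (forall x y, y \in W F x -> f x = f y),
      (forall A B, contr_adj e F A B -> big A -> big B ->
         forall x y, x \in A -> y \in B -> f x != f y) &
      (forall tx ts ty, cable_path (contr_adj e F) tx ts ty ->
         ts != [::] -> big tx -> big ty -> all (@singleton V) ts ->
         (forall x y, x \in tx -> y \in head tx ts -> f x != f y) /\
         (forall x y, x \in ty -> y \in last tx ts -> f x != f y))].

(* Main.v *)
Require Import Defs.
From mathcomp Require Import all_boot zify.
From mathcomp Require Import boolp.
Set Implicit Arguments. Unset Strict Implicit. Unset Printing Implicit Defensive.

Definition swp (a m c : 'I_3) := if c == a then m else if c == m then a else c.
Lemma swpK a m : cancel (swp a m) (swp a m).
Proof.
move=> c; rewrite /swp.
have [->|h1] := eqVneq c a; rewrite ?eqxx /=.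
  by have [->|h2] := eqVneq m a; rewrite ?eqxx //= (negbTE h2).
have [->|h2] := eqVneq c m; rewrite ?eqxx /=.
  by [] || rewrite (negbTE h1) eqxx.
by rewrite (negbTE h1) (negbTE h2).
Qed.
Lemma swp_a a m c : swp a m c = a -> c = m.
Proof. by move=> h; rewrite -(swpK a m c) h /swp eqxx. Qed.

Section Abs.
Variable U : finType.
Variable adj : rel U.
Hypothesis adj_sym : symmetric adj.
Hypothesis adj_irr : irreflexive adj.
Variable bg : pred U.
Variable d : U.
Hypothesis cact : forall a b c1 c2, adj a b -> is_cycle adj c1 -> is_cycle adj c2 ->
    cycle_edge c1 a b -> cycle_edge c2 a b ->
    forall x y, cycle_edge c1 x y = cycle_edge c2 x y.

Definition chn (c : seq U) : Prop :=
  [/\ 2 < size c,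
      forall i, i.+1 < size c -> adj (nth d c i) (nth d c i.+1),
      bg (nth d c 0) && bg (nth d c (size c).-1), nth d c 0 != nth d c (size c).-1 &
      forall i, 0 < i -> i < (size c).-1 ->
        [/\ ~~ bg (nth d c i), nth d c i.-1 != nth d c i.+1 &
            nbhd adj (nth d c i) = [set nth d c i.-1; nth d c i.+1]]].

Lemma set2_inj (a b c : U) : [set a; b] = [set a; c] -> b != a -> c != a -> b = c.
Proof.
move=> E hb hc; have: c \in [set a; b] by rewrite E !inE eqxx orbT.
by rewrite !inE (negbTE hc) /= => /eqP ->.
Qed.

Lemma chn_rev c : chn c -> chn (rev c).
Proof.
case=> [s3 ad /andP[b0 b1] ne int]; set n := size c in s3 ad b1 ne int *.
have E i : i < n -> nth d (rev c) i = nth d c (n - i.+1) by move=> h; rewrite nth_rev.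
rewrite /chn size_rev; split => //.
- move=> i hi; rewrite !E; try lia.
  have -> : n - i.+1 = (n - i.+2).+1 by lia.
  rewrite adj_sym; apply: ad; lia.
- rewrite !E; try lia. have -> : n - 1 = n.-1 by lia. have -> : n - n.-1.+1 = 0 by lia. by rewrite b0 b1.
- rewrite !E; try lia. have -> : n - 1 = n.-1 by lia. have -> : n - n.-1.+1 = 0 by lia. by rewrite eq_sym.
- move=> i h0 h1; rewrite !E; try lia.
  have [] := int (n - i.+1); try lia.
  have -> : (n - i.+1).-1 = n - i.+2 by lia.
  have -> : (n - i.+1).+1 = n - i.-1.+1 by lia.
  move=> -> ne2 ->; split => //; first by rewrite eq_sym.
  by rewrite setUC.
Qed.

Lemma chn_uniq c c' : chn c -> chn c' -> nth d c 0 = nth d c' 0 ->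
  nth d c 1 = nth d c' 1 -> c = c'.
Proof.
case=> [s3 ad /andP[b0 b1] ne int] [s3' ad' /andP[b0' b1'] ne' int'] e0 e1.
have H : forall i, (i < size c -> i < size c' -> nth d c i = nth d c' i) /\
                   (i.+1 < size c -> i.+1 < size c' -> nth d c i.+1 = nth d c' i.+1).
  elim=> [|i [IH1 IH2]]; first by split.
  split => // h h'.
  have [_ n1 s1] := int i.+1 erefl ltac:(lia).
  have [_ n1' s1'] := int' i.+1 erefl ltac:(lia).
  move: s1 s1' n1 n1'; rewrite /= IH2; try lia.
  rewrite IH1; try lia.
  move=> S1 S1' n1 n1'.
  by apply: (@set2_inj (nth d c' i)); rewrite -?S1 -?S1' // eq_sym.
have [lt|gt|eq] := ltngtP (size c) (size c').
- have := (H (size c).-1).1; rewrite -> ltn_predL; have -> : 0 < size c by lia.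
  move=> /(_ erefl ltac:(lia)) E.
  have [nb _ _] := int' (size c).-1 ltac:(lia) ltac:(lia).
  by rewrite -E b1 in nb.
- have := (H (size c').-1).1; rewrite -> ltn_predL; have -> : 0 < size c' by lia.
  move=> /(_ ltac:(lia) erefl) E.
  have [nb _ _] := int (size c').-1 ltac:(lia) ltac:(lia).
  by rewrite E b1' in nb.
- apply: (eq_from_nth (x0 := d)) => // i hi; apply: (H i).1 => //; lia.
Qed.


Definition restr (A : {set U}) : rel U := fun x y => [&& x \in A, y \in A & adj x y].
Definition conn (A : {set U}) := forall x y, x \in A -> y \in A -> connect (restr A) x y.

Lemma restr_sym A : symmetric (restr A).
Proof. by move=> x y; rewrite /restr adj_sym andbCA. Qed.

Lemma restr_closed (A B : {set U}) x y : connect (restr A) x y -> x \in B ->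
  (forall a b, a \in B -> restr A a b -> b \in B) -> connect (restr (A :&: B)) x y.
Proof.
move=> /connectP [p pa ->] xB cl; elim: p x pa xB => [|z p IH] x /=; first by rewrite connect0.
move=> /andP[xz pz] xB; have zB := cl _ _ xB xz.
apply: connect_trans (IH z pz zB); apply: connect1.
by move: xz; rewrite /restr !inE xB zB => /and3P[-> -> ->].
Qed.

Lemma path_restr_in A x q : path (restr A) x q -> {subset q <= A}.
Proof.
elim: q x => [|z q IH] x //= /andP[/and3P[_ zA _] pq] y.
by rewrite inE => /orP[/eqP->//|]; apply: (IH _ pq).
Qed.

Lemma zip_rot_mem (v : U) (s : seq U) (a b : U) : (a, b) \in zip (v :: s) (rot 1 (v :: s)) ->
  exists i, [/\ i <= size s, nth d (v :: s) i = a & nth d (rcons s v) i = b].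
Proof.
rewrite rot1_cons => m; exists (index (a, b) (zip (v :: s) (rcons s v))).
have sz : size (zip (v :: s) (rcons s v)) = (size s).+1 by rewrite size_zip size_rcons /= minnn.
have := m; rewrite -index_mem sz ltnS => -> ; move: (nth_index (d, d) m).
by rewrite nth_zip ?size_rcons // => -[-> ->].
Qed.

Lemma ce_v_false (v : U) (s : seq U) (a : U) : uniq (v :: s) -> s != [::] -> a != last v s -> a != head v s ->
  cycle_edge (v :: s) a v = false.
Proof.
move=> /= /andP[vs us] sn al ah; rewrite /cycle_edge; apply/norP; split; apply/negP.
- move=> /zip_rot_mem [i [hi e1 e2]]; move: e2; rewrite nth_rcons.
  case: ifP => [lt e2|ge]; first by move: vs; rewrite -e2 mem_nth.
  have -> : i == size s by rewrite eqn_leq hi leqNgt ge.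
  move=> _; move: e1; have -> : i = (size (v :: s)).-1 by apply/eqP; rewrite /= eqn_leq hi leqNgt ge.
  by rewrite nth_last /= => e1; move: al; rewrite e1 eqxx.
- move=> /zip_rot_mem [[|i] [hi e1 e2]].
  + by move: ah e2; case: s sn {vs us hi e1 al} => // x s' _ /= ax e2; rewrite e2 eqxx in ax.
  + by move: vs; rewrite -[v in v \notin _]e1 /= mem_nth.
Qed.

Lemma ce_first (v x : U) (q : seq U) : cycle_edge (v :: x :: q) v x.
Proof. by rewrite /cycle_edge rot1_cons /= inE eqxx. Qed.

Lemma ce_last (v : U) (s : seq U) : cycle_edge (v :: s) (last v s) v.
Proof.
rewrite /cycle_edge rot1_cons [v :: s]lastI zip_rcons ?size_belast //.
by rewrite mem_rcons mem_head.
Qed.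

Lemma mk_path K x y : connect (restr K) x y -> x != y ->
  exists q, [/\ path adj x q, uniq (x :: q), {subset q <= K}, last x q = y & q != [::]].
Proof.
move=> /connectP[p pa ->]; case: (shortenP pa) => q pq uq _ xy.
exists q; split => //.
- by apply: sub_path pq => a b /and3P[].
- exact: path_restr_in pq.
- by case: q {pq uq} xy => //=; rewrite eqxx.
Qed.

Lemma nbr_le2 K v : conn K -> v \notin K -> #|[set x in K | adj v x]| <= 2.
Proof.
move=> cK vK; rewrite leqNgt; apply/negP => /card_gt2P [x [y [z [[xK yK zK] [xy yz zx]]]]].
move: xK yK zK; rewrite !inE => /andP[xK vx] /andP[yK vy] /andP[zK vz].
have [q1 [p1 u1 s1 l1 n1]] := mk_path (cK _ _ xK yK) xy.
have [q2 [p2 u2 s2 l2 n2]] := mk_path (cK _ _ xK zK) ltac:(by rewrite eq_sym).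
have Uq q : uniq (x :: q) -> {subset q <= K} -> uniq (v :: x :: q).
  move=> uq sq; rewrite cons_uniq uq andbT inE negb_or; apply/andP; split.
    by apply: contraNneq vK => ->.
  by apply/negP => /sq; apply/negP.
have cyc q : path adj x q -> uniq (x :: q) -> {subset q <= K} -> q != [::] ->
     adj v (last x q) -> is_cycle adj (v :: x :: q).
  move=> pq uq sq nq vl; rewrite /is_cycle Uq // andbC /=.
  rewrite rcons_path pq vx adj_sym vl /=; by case: q nq {pq uq sq vl}.
have := cact vx (cyc _ p1 u1 s1 n1 ltac:(by rewrite l1)) (cyc _ p2 u2 s2 n2 ltac:(by rewrite l2))
   (ce_first _ _ _) (ce_first _ _ _) y v.
have -> : cycle_edge (v :: x :: q1) y v by rewrite -l1 -[last x q1]/(last v (x :: q1)) ce_last.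
rewrite ce_v_false //; first exact: Uq.
- by rewrite /= l2.
- by rewrite /= eq_sym.
Qed.

Section Decomp.
Variables (Z : {set U}) (v w : U).
Hypotheses (cZ : conn Z) (vZ : v \in Z) (wZ : w \in Z) (vw : v != w).

Definition Kc := [set y in Z | (y != v) && connect (restr (Z :\ v)) w y].
Definition Rc := Z :\: Kc.

Lemma K_sub : Kc \subset Z.
Proof. by apply/subsetP=> y; rewrite inE => /andP[]. Qed.
Lemma vK : v \notin Kc.
Proof. by rewrite inE eqxx andbF. Qed.
Lemma wK : w \in Kc.
Proof. by rewrite inE wZ eq_sym vw connect0. Qed.
Lemma vR : v \in Rc.
Proof. by rewrite inE vK vZ. Qed.
Lemma wR : w \notin Rc.
Proof. by rewrite inE wK. Qed.

Lemma K_clos x y : x \in Kc -> y \in Z -> y != v -> adj x y -> y \in Kc.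
Proof.
rewrite !inE => /and3P[xZ xv cx] yZ yv xy; rewrite yZ yv /=.
apply: connect_trans cx _; apply: connect1; by rewrite /restr !inE xv xZ yv yZ xy.
Qed.

Lemma K_conn : conn Kc.
Proof.
have H y : y \in Kc -> connect (restr Kc) w y.
  move=> yK; have : connect (restr (Z :\ v)) w y by move: yK; rewrite inE => /and3P[].
  move=> /restr_closed /(_ wK) H.
  have -> : Kc = (Z :\ v) :&: Kc.
    apply/setP=> z; rewrite !inE; case: (z \in Z); case: (z != v) => //=; by rewrite ?andbF.
  apply: H => a b aK /and3P[_ bZv ab]; move: bZv; rewrite in_setD1 => /andP[bv bZ].
  exact: K_clos aK bZ bv ab.
move=> x y xK yK; apply: connect_trans (H y yK).
by rewrite (sym_connect_sym (restr_sym _)); apply: H.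
Qed.

Lemma R_conn : conn Rc.
Proof.
have H x : x \in Rc -> connect (restr Rc) x v.
  move=> xR; have := cZ (x := x) (y := v); rewrite vZ.
  move: xR; rewrite inE => /andP[xK xZ] /(_ xZ erefl) /connectP[p pa lp].
  elim: p x xK xZ pa lp => [|z p IH] x xK xZ /=; first by move=> _ ->; rewrite connect0.
  move=> /andP[/and3P[_ zZ xz] pz] lp.
  have [->|xv] := eqVneq x v; first by rewrite connect0.
  have zK : z \notin Kc.
    apply/negP=> zK; move/negP: xK; apply; apply: K_clos zK xZ xv _; by rewrite adj_sym.
  apply: connect_trans (IH z zK zZ pz lp); apply: connect1.
  by rewrite /restr /Rc !in_setD xK zK xZ zZ xz.
move=> x y xR yR; apply: connect_trans (H x xR) _.
by rewrite (sym_connect_sym (restr_sym _)); apply: H.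
Qed.

Lemma K_lt : #|Kc| < #|Z|.
Proof. by apply: proper_card; apply/properP; split; [exact: K_sub | exists v => //; exact: vK]. Qed.

Lemma R_lt : #|Rc| < #|Z|.
Proof.
apply: proper_card; apply/properP; split; first by apply: subsetDl.
by exists w => //; exact: wR.
Qed.

Lemma cross x y : x \in Kc -> y \in Z -> y \notin Kc -> adj x y -> y = v.
Proof. by move=> xK yZ yK xy; apply/eqP; apply: contraNT yK => yv; apply: K_clos xK yZ yv xy. Qed.

End Decomp.

Definition bZ (Z : {set U}) := #|[set x in Z | bg x]|.
Definition inZ (Z : {set U}) c := forall i, i < size c -> nth d c i \in Z.
Definition C (Z : {set U}) :=
  [set t | `[< exists c, [/\ chn c, inZ Z c & nth d c 1 = t] >]].

Lemma side_gen (Z K : {set U}) v c :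
  (forall x y, x \in K -> y \in Z -> y != v -> adj x y -> y \in K) ->
  (forall i, i.+1 < size c -> adj (nth d c i) (nth d c i.+1)) -> inZ Z c ->
  forall i j, i <= j -> j < size c -> (forall m, i <= m -> m <= j -> nth d c m != v) ->
      (nth d c i \in K) = (nth d c j \in K).
Proof.
move=> cl ad iz i j; elim: j => [|j IHj] hij hj hm; first by have -> : i = 0 by lia.
have [->//|lt] := eqVneq i j.+1.
rewrite IHj; [|lia|lia|by move=> m h1 h2; apply: hm; lia].
have z1 := iz j ltac:(lia); have z2 := iz j.+1 hj.
have n1 := hm j ltac:(lia) ltac:(lia); have n2 := hm j.+1 ltac:(lia) ltac:(lia).
have a := ad j hj.
apply/idP/idP => h; first exact: cl h z2 n2 a.
by apply: cl h z1 n1 _; rewrite adj_sym.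
Qed.

Lemma classify (Z K : {set U}) v c :
  (forall x y, x \in K -> y \in Z -> y != v -> adj x y -> y \in K) ->
  v \notin K -> bg v -> chn c -> inZ Z c ->
  [\/ inZ K c, inZ (Z :\: K) c, (nth d c 0 = v /\ nth d c 1 \in K) |
      (nth d c (size c).-1 = v /\ nth d c (size c).-2 \in K)].
Proof.
move=> cl vK bv ch iz; case: ch => [s3 ad /andP[b0 b1] ne int].
have side := side_gen cl ad iz.
set n := size c in s3 ad b1 ne int side *.
have nv m : 0 < m -> m < n.-1 -> nth d c m != v.
  by move=> h1 h2; have [nb _ _] := int m h1 h2; apply: contraNneq nb => ->.
have inR x : x \in Z -> x \notin K -> x \in Z :\: K by move=> xZ xK; rewrite inE xZ xK.
have [e0|n0] := eqVneq (nth d c 0) v.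
- have nl : nth d c n.-1 != v by rewrite -e0 eq_sym.
  have hm m : 1 <= m -> m <= n.-1 -> nth d c m != v.
    by move=> h1 h2; have [->//|] := eqVneq m n.-1; move=> h3; apply: nv; lia.
  case k1: (nth d c 1 \in K); first by apply: Or43.
  apply: Or42 => i hi; apply: inR; first exact: iz.
  case: i hi => [|i] hi; first by rewrite e0.
  by rewrite -(side 1 i.+1) ?k1 //; try lia; move=> m h1 h2; apply: hm; lia.
have [el|nl] := eqVneq (nth d c n.-1) v.
- have hm m : 0 <= m -> m <= n.-2 -> nth d c m != v.
    by move=> _ h2; case: m h2 => [|m] h2 //; apply: nv; lia.
  case k1: (nth d c n.-2 \in K); first by apply: Or44.
  apply: Or42 => i hi; apply: inR; first exact: iz.
  have [->|hi2] := eqVneq i n.-1; first by rewrite el.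
  by rewrite (side i n.-2) ?k1 //; try lia; move=> m h1 h2; apply: hm; lia.
- have hm m : m < n -> nth d c m != v.
    move=> h; case: m h => [|m] h //; have [->//|] := eqVneq m.+1 n.-1.
    by move=> h3; apply: nv; lia.
  case k0: (nth d c 0 \in K).
  + by apply: Or41 => i hi; rewrite -(side 0 i) //; try lia; move=> m _ h; apply: hm; lia.
  + apply: Or42 => i hi; apply: inR; first exact: iz.
    by rewrite -(side 0 i) ?k0 //; try lia; move=> m _ h; apply: hm; lia.
Qed.

Lemma C_step Z : conn Z ->
  (forall Y : {set U}, #|Y| < #|Z| -> conn Y -> #|C Y| <= 4 * (bZ Y).-1) ->
  #|C Z| <= 4 * (bZ Z).-1.
Proof.
move=> cZ IH.
case: (boolP [exists v, exists w, [&& v \in Z, w \in Z, bg v, bg w & v != w]]); last first.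
  move=> /negP nex; have -> : C Z = set0; last by rewrite cards0.
  apply/setP => t; rewrite !inE; apply/negP => /asboolP [c [[s3 ad /andP[b0 b1] ne int] iz _]].
  apply: nex; apply/existsP; exists (nth d c 0); apply/existsP; exists (nth d c (size c).-1).
  rewrite b0 b1 ne !iz //; lia.
move=> /existsP [v /existsP [w /and5P [vZ wZ bv bw vw]]].
set K := Kc Z v w; set R := Rc Z v w.
have KZ : K \subset Z by apply: K_sub.
have vnK : v \notin K by apply: vK.
have bsplit : bZ Z = bZ K + bZ R.
  rewrite /bZ -(cardsID K [set x in Z | bg x]); congr (_ + _); apply: eq_card => x;
  rewrite /R /Rc.
  - rewrite in_setI [x \in [set _ in Z | _]]inE [x \in [set _ in K | _]]inE.
    case xK: (x \in K); last by rewrite !andbF. by rewrite (subsetP KZ _ xK) andbT.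
  - rewrite in_setD [x \in [set _ in Z | _]]inE [x \in [set _ in Z :\: _ | _]]inE in_setD.
    by case: (x \in Kc Z v w).
have bK : 0 < bZ K by apply/card_gt0P; exists w; rewrite inE bw andbT; apply: wK.
have bR : 0 < bZ R by apply/card_gt0P; exists v; rewrite inE bv andbT; apply: vR.
have hK := IH K ltac:(by apply: K_lt) ltac:(by apply: K_conn).
have hR := IH R ltac:(by apply: R_lt) ltac:(by apply: R_conn).
set E1 := [set x in K | adj v x].
have hE1 : #|E1| <= 2 by apply: nbr_le2 => //; apply: K_conn.
pose g u := odflt u [pick t | `[< exists c, [/\ chn c, nth d c 0 = v, nth d c 1 = u &
                                         nth d c (size c).-2 = t] >]].
have cl : forall x y, x \in K -> y \in Z -> y != v -> adj x y -> y \in K.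
  by move=> x y; apply: K_clos.
have sub : C Z \subset C K :|: C R :|: E1 :|: g @: E1.
  apply/subsetP => t; rewrite inE => /asboolP [c [ch iz e1]].
  rewrite !in_setU.
  case: (classify cl vnK bv ch iz) => [h|h|[e0 k1]|[el k1]].
  - have X : t \in C K by rewrite inE; apply/asboolP; exists c.
    by rewrite X.
  - have X : t \in C R by rewrite inE; apply/asboolP; exists c.
    by rewrite X ?orbT.
  - have [s3 ad _ _ _] := ch.
    have X : t \in E1 by rewrite inE -e1 k1 -e0 ad //; lia.
    by rewrite X ?orbT.
  - have [s3 ad _ _ _] := ch.
    have uE1 : nth d c (size c).-2 \in E1.
      rewrite inE k1 /= -el adj_sym; have -> : (size c).-1 = (size c).-2.+1 by lia.
      by apply: ad; lia.
    suff -> : t = g (nth d c (size c).-2) by rewrite imset_f ?orbT.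
    have chr := chn_rev ch.
    have r0 : nth d (rev c) 0 = v by rewrite nth_rev; [rewrite subn1 | lia].
    have r1 : nth d (rev c) 1 = nth d c (size c).-2.
      by rewrite nth_rev; [congr nth; lia | lia].
    have r2 : nth d (rev c) (size (rev c)).-2 = t.
      by rewrite size_rev nth_rev -?e1; [congr nth; lia | lia].
    rewrite /g; case: pickP => [t' /asboolP [c' [ch' e0' e1' e2']] | none].
    + have := chn_uniq ch' chr; rewrite e0' e1' r0 r1 => /(_ erefl erefl) ec.
      by rewrite -e2' ec r2.
    + by move: (none t) => /asboolP []; exists (rev c).
have cU (A B : {set U}) : #|A :|: B| <= #|A| + #|B| by rewrite cardsU leq_subr.
apply: leq_trans (subset_leq_card sub) _.
have := leq_imset_card g E1.
have := cU (C K :|: C R :|: E1) (g @: E1); have := cU (C K :|: C R) E1; have := cU (C K) (C R).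
rewrite bsplit; clear -hK hR bK bR hE1; lia.
Qed.

Lemma C_bound n (Z : {set U}) : #|Z| <= n -> conn Z -> #|C Z| <= 4 * (bZ Z).-1.
Proof.
elim: n Z => [|n IHn] Z hZ cZ; apply: C_step cZ _ => Y hY cY.
  by move: hZ hY; rewrite leqn0 => /eqP ->.
by apply: IHn => //; lia.
Qed.

Definition proper_on (Z : {set U}) (col : U -> 'I_3) :=
  forall x y, x \in Z -> y \in Z -> adj x y -> col x != col y.

Lemma col_step Z : conn Z ->
  (forall Y : {set U}, #|Y| < #|Z| -> conn Y -> exists col, proper_on Y col) ->
  exists col, proper_on Z col.
Proof.
move=> cZ IH.
case: (boolP [exists v, exists w, [&& v \in Z, w \in Z & v != w]]); last first.
  move=> /negP nex; exists (fun _ => ord0) => x y xZ yZ xy; exfalso; apply: nex.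
  apply/existsP; exists x; apply/existsP; exists y; rewrite xZ yZ /=.
  by apply: contraTneq xy => ->; rewrite adj_irr.
move=> /existsP [v /existsP [w /and3P [vZ wZ vw]]].
set K := Kc Z v w; set R := Rc Z v w.
have [cK hK] := IH K ltac:(by apply: K_lt) ltac:(by apply: K_conn).
have [cR hR] := IH R ltac:(by apply: R_lt) ltac:(by apply: R_conn).
set E1 := [set x in K | adj v x].
have hE1 : #|E1| <= 2 by apply: nbr_le2 => //; [apply: K_conn | apply: vK].
have [m mE] : exists m : 'I_3, m \notin cK @: E1.
  case: (pickP (fun m : 'I_3 => m \notin cK @: E1)) => [m hm|none]; first by exists m.
  have : #|[set: 'I_3]| <= #|cK @: E1|.
    by apply: subset_leq_card; apply/subsetP=> m _; move: (none m) => /negbFE.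
  rewrite cardsT card_ord => h; have := leq_imset_card cK E1; clear -h hE1; lia.
pose pi := swp (cR v) m.
have pipi : cancel pi pi := swpK (cR v) m.
have pi_neq c : c \in cK @: E1 -> pi c != cR v.
  move=> hc; apply/negP => /eqP h.
  have cm : c = m by apply: swp_a h.
  by rewrite -cm hc in mE.
exists (fun x => if x \in K then pi (cK x) else cR x) => x y xZ yZ xy.
have inR z : z \in Z -> z \notin K -> z \in R by move=> zZ zK; rewrite inE zZ zK.
case xK: (x \in K); case yK: (y \in K).
- by rewrite (can_eq pipi) hK.
- have yv : y = v by apply: cross xK yZ _ xy; rewrite yK.
  rewrite yv; apply: pi_neq; apply: imset_f; rewrite inE xK /= adj_sym -yv //.
- have xv : x = v by apply: cross yK xZ _ _; rewrite ?xK // adj_sym.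
  rewrite xv eq_sym; apply: pi_neq; apply: imset_f; rewrite inE yK /= -xv //.
- by apply: hR => //; apply: inR => //; rewrite ?xK ?yK.
Qed.

Lemma col_bound n (Z : {set U}) : #|Z| <= n -> conn Z -> exists col, proper_on Z col.
Proof.
elim: n Z => [|n IHn] Z hZ cZ; apply: col_step cZ _ => Y hY cY.
  by move: hZ hY; rewrite leqn0 => /eqP ->.
by apply: IHn => //; lia.
Qed.

End Abs.


Lemma count_agree (V : finType) (X : {set V}) (g : V -> 'I_3) :
  3 ^ #|V| <= 3 ^ #|X| * #|[set f : {ffun V -> 'I_3} | [forall x, (x \in X) ==> (f x == g x)]]|.
Proof.
set S := [set f : {ffun V -> 'I_3} | _].
set Q := [set h : {ffun V -> 'I_3} | [forall x, (x \notin X) ==> (h x == ord0)]].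
pose phi (f : {ffun V -> 'I_3}) :=
  ([ffun x => if x \in X then g x else f x], [ffun x => if x \in X then f x else ord0]).
have inj : injective phi.
  move=> f1 f2 [E1 E2]; apply/ffunP => x.
  move/ffunP: E1 => /(_ x); move/ffunP: E2 => /(_ x); rewrite !ffunE.
  by case: (x \in X) => [-> | _ ->].
have : #|[set: {ffun V -> 'I_3}]| <= #|setX S Q|.
  rewrite -(card_imset _ inj); apply: subset_leq_card; apply/subsetP => p /imsetP [f _ ->].
  rewrite in_setX !inE; apply/andP; split; apply/forallP => x; rewrite ffunE;
  by case: (x \in X) => /=; rewrite ?eqxx.
rewrite cardsT card_ffun card_ord cardsX => h.
have hQ : #|Q| <= 3 ^ #|X|.
  have : Q \subset pffun_on ord0 X [set: 'I_3].
    apply/subsetP => q; rewrite inE => /forallP hq; apply/pffun_onP; split.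
      apply/subsetP => x; rewrite supportE; apply: contraR => xX.
      by have := hq x; rewrite xX /=.
    by move=> y _; rewrite inE.
  by move/subset_leq_card; rewrite card_pffun_on cardsT card_ord.
rewrite mulnC; apply: leq_trans h _; by rewrite leq_mul2l hQ orbT.
Qed.

Section Main.
Variable V : finType.
Variable e : rel V.
Variable F : {set {set V}}.
Hypothesis esym : symmetric e.
Hypothesis esub : edge_subset e F.

Local Notation adj := (contr_adj e F).
Local Notation P := (parts F).

Lemma cadj_sym : symmetric adj.
Proof.
move=> A B; rewrite /contr_adj andbCA (eq_sym A B); congr (_ && (_ && (_ && _))).
apply/existsP/existsP => [] [x /andP [xA /existsP [y /andP [yB xy]]]];
  exists y; rewrite yB /=; apply/existsP; exists x; by rewrite xA esym.
Qed.

Lemma cadj_irr : irreflexive adj.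
Proof. by move=> A; rewrite /contr_adj eqxx /= !andbF. Qed.

Lemma Frel_sym : symmetric (Frel F).
Proof. by move=> x y; rewrite /Frel setUC. Qed.

Lemma W_in x : x \in W F x.
Proof. by rewrite inE connect0. Qed.

Lemma W_eq x y : y \in W F x -> W F y = W F x.
Proof.
rewrite inE => cxy; apply/setP => z; rewrite !inE; apply/idP/idP => h.
- exact: connect_trans cxy h.
- rewrite (sym_connect_sym Frel_sym) in cxy; exact: connect_trans cxy h.
Qed.

Lemma part_W A x : A \in P -> x \in A -> W F x = A.
Proof. by move=> /imsetP [a _ ->] xa; exact: W_eq. Qed.

Lemma adj_P A B : adj A B -> (A \in P) && (B \in P).
Proof. by case/and4P => -> ->. Qed.

Lemma conn_P : cactus adj P -> conn adj P.
Proof.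
move=> cac a b aP bP.
have E : restr adj P =2 adj.
  move=> x y; rewrite /restr; case h: (adj x y); last by rewrite !andbF.
  by case/andP: (adj_P h) => -> ->.
by rewrite (eq_connect E); apply: cac.1.
Qed.

Definition Bv := [set x | big (W F x)].

Lemma Bv_card : #|Bv| <= 2 * #|F|.
Proof.
have sub : Bv \subset cover F.
  apply/subsetP => x; rewrite inE => /card_gt1P [y [z [yW zW yz]]].
  have [w [wW wx]] : exists w, w \in W F x /\ w != x.
    case: (eqVneq y x) => [yx|yx]; last by exists y.
    by exists z; split => //; rewrite -yx eq_sym.
  move: wW; rewrite inE => /connectP [p pF lp].
  case: p pF lp => [|z' p] /=; first by move=> _ wxe; rewrite -wxe eqxx in wx.
  move=> /andP [hz _] _; apply/bigcupP; exists [set x; z'] => //.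
  by rewrite !inE eqxx.
apply: leq_trans (subset_leq_card sub) _.
apply: leq_trans (leq_card_cover F).1 _.
rewrite mulnC -sum_nat_const; apply: leq_sum => s sF.
by have [x [y [_ ->]]] := esub sF; rewrite cards2; case: (x != y).
Qed.

Definition BP := [set A in P | big A].

Lemma BP_card : 2 * #|BP| <= #|Bv|.
Proof.
have triv : trivIset BP.
  apply/trivIsetP => A B; rewrite !inE => /andP[AP _] /andP[BP' _] AB.
  rewrite -setI_eq0; apply/eqP/setP => x; rewrite !inE; apply/negP => /andP[xA xB].
  by rewrite -(part_W AP xA) -(part_W BP' xB) eqxx in AB.
have E : #|cover BP| = \sum_(A in BP) #|A|.
  by apply/eqP; rewrite (leq_card_cover BP).2.
have sub : cover BP \subset Bv.
  apply/subsetP => x /bigcupP [A]; rewrite inE => /andP[AP bA] xA.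
  by rewrite inE (part_W AP xA).
apply: leq_trans (subset_leq_card sub); rewrite E mulnC -sum_nat_const.
by apply: leq_sum => A; rewrite inE => /andP[_ bA].
Qed.

Local Notation CP := (C adj (@big V) set0 P).

Lemma CP_notbig t : t \in CP -> ~~ big t /\ t \in P.
Proof.
rewrite inE => /asboolP [c [[s3 _ _ _ int] iz e1]].
have [nb _ _] := int 1 erefl ltac:(lia).
by rewrite -e1; split => //; apply: iz; lia.
Qed.

Definition Xc := [set x | W F x \in CP].

Lemma Xc_card : #|Xc| <= #|CP|.
Proof.
rewrite -(@card_in_imset _ _ (W F) Xc).
  apply: subset_leq_card; apply/subsetP => t /imsetP [x]; rewrite /Xc in_set => hx ->; done.
move=> x y; rewrite /Xc in_set => hx _ Exy.
have [nb _] := CP_notbig hx.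
have : #|W F x| <= 1 by rewrite leqNgt.
move/card_le1_eqP => h; symmetry; apply: h; first exact: W_in.
by rewrite Exy; exact: W_in.
Qed.

Lemma chn_inP c : chn adj (@big V) set0 c -> inZ set0 P c.
Proof.
case=> [s3 ad _ _ _] i hi; have [h|h] := ltnP i.+1 (size c).
  by move: (ad i h) => /adj_P /andP [].
have := ad i.-1 ltac:(lia); have -> : i.-1.+1 = i by lia.
by move=> /adj_P /andP [].
Qed.

Lemma cable_chn tx ts ty : cable_path adj tx ts ty -> ts != [::] -> big tx -> big ty ->
  all (@singleton V) ts -> chn adj (@big V) set0 (tx :: rcons ts ty).
Proof.
rewrite /cable_path; case=> [us pa nb] tsn btx bty als.
have sz : size (tx :: rcons ts ty) = (size ts).+2 by rewrite /= size_rcons.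
have D n : n < size (tx :: rcons ts ty) ->
    nth set0 (tx :: rcons ts ty) n = nth tx (tx :: rcons ts ty) n.
  by move=> h; apply: set_nth_default.
split.
- by rewrite sz ltnS ltnS lt0n size_eq0.
- move=> i hi; move/(pathP set0): pa => pa; apply: pa; move: hi; rewrite /= size_rcons; lia.
- by rewrite nth_last /= last_rcons btx bty.
- rewrite nth_last /= last_rcons; move: us; rewrite cons_uniq => /andP[nin _].
  by apply: contraNneq nin => <-; rewrite mem_rcons mem_head.
- move=> i h0 h1; split.
  + case: i h0 h1 => [//|j] _ h1; rewrite /= nth_rcons.
    have jl : j < size ts by move: h1; rewrite sz; lia.
    rewrite jl; move: (mem_nth set0 jl); move/(allP als); rewrite /singleton /big => /eqP ->; done.
  + rewrite nth_uniq //; try lia; rewrite ?sz; move: h1; rewrite sz; lia.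
  + have := nb i h0 h1; rewrite !D //; lia.
Qed.

End Main.

Theorem lemma3p3 (V : finType) (e : rel V) (k : nat) (F : {set {set V}}) :
  simple_graph e -> two_connected e -> edge_subset e F -> #|F| <= k ->
  cactus (contr_adj e F) (parts F) ->
  exists S : {set {ffun V -> 'I_3}},
    (forall f, f \in S -> compatible e F f) /\ 3 ^ #|V| <= 3 ^ (6 * k) * #|S|.
Proof.
move=> [esym eirr] _ esub Fk cac.
have asym : symmetric (contr_adj e F) := @cadj_sym V e F esym.
have airr : irreflexive (contr_adj e F) := @cadj_irr V e F.
have cP := conn_P cac.
have [col pc] := col_bound asym airr set0 cac.2 (leqnn _) cP.
have hC := C_bound asym (@big V) set0 cac.2 (leqnn _) cP.
pose X := Bv F :|: Xc e F.
pose g x := col (W F x).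
exists [set f : {ffun V -> 'I_3} | [forall x, (x \in X) ==> (f x == g x)]].
split; last first.
  apply: leq_trans (count_agree X g) _; rewrite leq_mul2r; apply/orP; right.
  apply: leq_pexp2l => //.
  have h1 : #|X| <= #|Bv F| + #|Xc e F| by rewrite cardsU leq_subr.
  have h2 := Xc_card e F.
  have h3 := Bv_card esub.
  have h4 := BP_card F.
  have h5 : bZ (@big V) (parts F) = #|BP F| by [].
  rewrite h5 in hC; clear -h1 h2 h3 h4 hC Fk; lia.
move=> f; rewrite inE => /forallP hf.
have fX x : x \in X -> f x = col (W F x) by move=> xX; have := hf x; rewrite xX => /eqP.
have fB x : big (W F x) -> f x = col (W F x).
  by move=> b; apply: fX; rewrite in_setU /Bv in_set b.
have fC x : W F x \in C (contr_adj e F) (@big V) set0 (parts F) -> f x = col (W F x).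
  by move=> h; apply: fX; rewrite in_setU /Xc in_set h orbT.
split.
- move=> x y yW; case bx: (big (W F x)).
    by rewrite fB // fB (W_eq yW).
  have h1 : #|W F x| <= 1 by rewrite leqNgt; move: bx; rewrite /big => ->.
  by move/card_le1_eqP: h1 => /(_ _ _ (W_in F x) yW) ->.
- move=> A B AB bA bB x y xA yB; case/andP: (adj_P AB) => AP BP'.
  rewrite fB; last by rewrite (part_W AP xA).
  rewrite fB; last by rewrite (part_W BP' yB).
  rewrite (part_W AP xA) (part_W BP' yB); exact: pc.
- move=> tx ts ty cp tsn btx bty als.
  have ch := cable_chn cp tsn btx bty als.
  have iz := chn_inP ch.
  have txP : tx \in parts F by have := iz 0 erefl.
  have tyP : ty \in parts F.
    by have := iz (size ts).+1; rewrite /= size_rcons nth_rcons ltnn eqxx; apply.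
  have [us pa _] := cp.
  have a1 : contr_adj e F tx (head tx ts).
    by case: ts tsn {cp ch iz als us} pa => //= t ts' _ /andP[].
  have a2 : contr_adj e F ty (last tx ts).
    by move: pa; rewrite rcons_path asym => /andP[].
  have hC1 : head tx ts \in C (contr_adj e F) (@big V) set0 (parts F).
    rewrite inE; apply/asboolP; exists (tx :: rcons ts ty); split => //.
    by case: ts tsn {cp ch iz als us pa a1 a2}.
  have hC2 : last tx ts \in C (contr_adj e F) (@big V) set0 (parts F).
    rewrite inE; apply/asboolP; exists (rev (tx :: rcons ts ty)).
    have chr := chn_rev asym ch; split => //; first exact: chn_inP chr.
    case/lastP: ts tsn {cp ch iz als us pa chr a1 a2 hC1} => [//|ts' t] _.
    by rewrite last_rcons rev_cons !rev_rcons.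
  have [_ hP1] := CP_notbig hC1.
  have [_ hP2] := CP_notbig hC2.
  split => x y xt yt.
  + rewrite fB; last by rewrite (part_W txP xt).
    rewrite fC; last by rewrite (part_W hP1 yt).
    rewrite (part_W txP xt) (part_W hP1 yt); exact: pc.
  + rewrite fB; last by rewrite (part_W tyP xt).
    rewrite fC; last by rewrite (part_W hP2 yt).
    rewrite (part_W tyP xt) (part_W hP2 yt); exact: pc.
Qed.
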